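(* Let $e(\tau,s)$ be a complete equation of state and let $s_0$ be fixed. Assume the energy isentrope $\tau\mapsto e_{s_0}(\tau):=e(\tau,s_0)$ is convex on $(0,\infty)$. For $\bm u=(\rho,\bm m,E)\in\mathbb R\times\mathbb R^d\times\mathbb R$ with $\rho>0$, set $\tau(\bm u)=\rho^{-1}$ and $\mathsf e(\bm u)=\rho^{-1}E-\tfrac12\|\rho^{-1}\bm m\|_{\ell^2}^2$. Then the functional $$\bm u\longmapsto \rho\,\mathsf e(\bm u)-\rho\, e_{s_0}(\tau(\bm u))$$ is a concave function of $\bm u$ on $\{\rho>0\}$.
   Context: A complete equation of state is a function $e(\tau,s)$ giving the specific internal energy in terms of specific volume $\tau>0$ and specific entropy $s$; the pressure is $p=-\partial_\tau e$ and the temperature $T=\partial_s e$. The ''energy isentrope'' at entropy $s$ is the one-variable function $\tau\mapsto e(\tau,s)$. *)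

(* Defs.v *)
From mathcomp Require Import all_boot all_order all_algebra.
From mathcomp Require Import all_classical all_reals all_analysis.
Set Implicit Arguments. Unset Strict Implicit. Unset Printing Implicit Defensive.
Import Order.TTheory GRing.Theory Num.Theory.
Local Open Scope ring_scope.

(* A complete equation of state: e(tau, s), tau > 0, with partial
   derivatives p = -d_tau e and T = d_s e existing. *)
Definition complete_eos (R : realType) (e : R -> R -> R) : Prop :=
  forall tau s : R, 0 < tau ->
    derivable (fun t : R => e t s) tau 1 /\ derivable (fun s' : R => e tau s') s 1.

Definition convex_on_pos (R : realType) (f : R -> R) : Prop :=
  forall (x y t : R), 0 < x -> 0 < y -> 0 <= t <= 1 ->
    f ((1 - t) * x + t * y) <= (1 - t) * f x + t * f y.

Definition state (R : realType) (d : nat) : Type := (R * 'rV[R]_d * R)%type.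

Definition st_rho (R : realType) (d : nat) (u : state R d) : R := u.1.1.
Definition st_m (R : realType) (d : nat) (u : state R d) : 'rV[R]_d := u.1.2.
Definition st_E (R : realType) (d : nat) (u : state R d) : R := u.2.

Definition st_comb (R : realType) (d : nat) (t : R) (u v : state R d) : state R d :=
  ((1 - t) * st_rho u + t * st_rho v,
   (1 - t) *: st_m u + t *: st_m v,
   (1 - t) * st_E u + t * st_E v).

Definition tau_of (R : realType) (d : nat) (u : state R d) : R := (st_rho u)^-1.

Definition sqnorm (R : realType) (d : nat) (v : 'rV[R]_d) : R := \sum_(i < d) (v ord0 i) ^+ 2.

Definition int_energy (R : realType) (d : nat) (u : state R d) : R :=
  (st_rho u)^-1 * st_E u - 2^-1 * sqnorm ((st_rho u)^-1 *: st_m u).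

Definition concave_on_pos_rho (R : realType) (d : nat) (F : state R d -> R) : Prop :=
  forall (u v : state R d) (t : R), 0 < st_rho u -> 0 < st_rho v -> 0 <= t <= 1 ->
    (1 - t) * F u + t * F v <= F (st_comb t u v).

(* Main.v *)
Require Import Defs.
From mathcomp Require Import all_boot all_order all_algebra.
From mathcomp Require Import all_classical all_reals all_analysis.
From mathcomp Require Import ring lra.
Import Order.TTheory GRing.Theory Num.Theory.
Local Open Scope ring_scope.

Lemma qol (R : realType) (a b r1 r2 t : R) : 0 < r1 -> 0 < r2 -> 0 <= t <= 1 ->
  ((1 - t) * a + t * b) ^+ 2 / ((1 - t) * r1 + t * r2)
  <= (1 - t) * (a ^+ 2 / r1) + t * (b ^+ 2 / r2).
Proof.
move=> h1 h2 /andP[t0 t1].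
have hr : 0 < (1 - t) * r1 + t * r2 by nra.
rewrite -subr_ge0.
have -> : (1 - t) * (a ^+ 2 / r1) + t * (b ^+ 2 / r2) -
   ((1 - t) * a + t * b) ^+ 2 / ((1 - t) * r1 + t * r2)
   = t * (1 - t) * (a * r2 - b * r1) ^+ 2 / (r1 * r2 * ((1 - t) * r1 + t * r2)).
  by field; rewrite !(gt_eqF hr, gt_eqF h1, gt_eqF h2).
apply: divr_ge0; last by rewrite !mulr_ge0 ?ltW.
by rewrite mulr_ge0 ?sqr_ge0 // mulr_ge0 // subr_ge0.
Qed.

Lemma persp (R : realType) (f : R -> R) (r1 r2 t : R) :
  convex_on_pos f -> 0 < r1 -> 0 < r2 -> 0 <= t <= 1 ->
  ((1 - t) * r1 + t * r2) * f (((1 - t) * r1 + t * r2)^-1)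
  <= (1 - t) * (r1 * f r1^-1) + t * (r2 * f r2^-1).
Proof.
move=> hf h1 h2 /andP[t0 t1].
set r := (1 - t) * r1 + t * r2.
have hr : 0 < r by rewrite /r; nra.
set l := t * r2 / r.
have l0 : 0 <= l by apply: divr_ge0; [apply: mulr_ge0 => //; apply: ltW | apply: ltW].
have l1 : l <= 1.
  rewrite /l ler_pdivrMr // mul1r /r.
  have : 0 <= (1 - t) * r1 by rewrite mulr_ge0 ?subr_ge0 // ltW.
  lra.
have e1 : r^-1 = (1 - l) * r1^-1 + l * r2^-1.
  by rewrite /l /r; field; rewrite -/r !(gt_eqF hr, gt_eqF h1, gt_eqF h2).
have := hf r1^-1 r2^-1 l; rewrite !invr_gt0 => /(_ h1 h2).
rewrite l0 l1 -e1 => /(_ isT) H.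
have := ler_wpM2l (ltW hr) H.
have -> : r * ((1 - l) * f r1^-1 + l * f r2^-1) =
   (1 - t) * (r1 * f r1^-1) + t * (r2 * f r2^-1).
  by rewrite /l /r; field; rewrite -/r !(gt_eqF hr, gt_eqF h1, gt_eqF h2).
by [].
Qed.

Lemma rho_ie (R : realType) (d : nat) (u : state R d) : 0 < st_rho u ->
  st_rho u * int_energy u =
  st_E u - 2^-1 * \sum_(i < d) ((st_m u ord0 i) ^+ 2 / st_rho u).
Proof.
move=> h; rewrite /int_energy /sqnorm mulrBr mulrA mulfV ?lt0r_neq0 // mul1r.
congr (_ - _); rewrite mulrCA; congr (_ * _); rewrite mulr_sumr.
apply: eq_bigr => i _; rewrite mxE.
by field; rewrite gt_eqF.
Qed.

Theorem proposition2p8 (R : realType) (d : nat) (e : R -> R -> R) (s0 : R) :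
  complete_eos e ->
  convex_on_pos (fun tau => e tau s0) ->
  concave_on_pos_rho
    (fun u : state R d => st_rho u * int_energy u - st_rho u * e (tau_of u) s0).
Proof.
move=> _ hf u v t hu hv ht.
have hc : 0 < st_rho (st_comb t u v).
  rewrite /st_comb /st_rho /=; move: ht => /andP[? ?]; rewrite -/(st_rho u) -/(st_rho v); nra.
rewrite !rho_ie //.
have P := @persp _ _ _ _ _ hf hu hv ht.
rewrite /tau_of.
have S : \sum_(i < d) (st_m (st_comb t u v) ord0 i ^+ 2 / st_rho (st_comb t u v))
   <= (1 - t) * \sum_(i < d) (st_m u ord0 i ^+ 2 / st_rho u)
      + t * \sum_(i < d) (st_m v ord0 i ^+ 2 / st_rho v).
  rewrite !mulr_sumr -big_split /=; apply: ler_sum => i _.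
  rewrite /st_comb /st_m /st_rho /= !mxE.
  exact: qol.
have h2 : (0 : R) <= 2^-1 by rewrite invr_ge0.
have S2 := ler_wpM2l h2 S.
move: P S2; rewrite /st_comb /st_E /st_rho /= -/(st_rho u) -/(st_rho v).
lra.
Qed.
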